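(* Let $V\subset U\subset\mathcal{A}_0$, and suppose that for every continuous linear functional $\lambda$ on $\mathcal{A}$, with $\lambda:=g$, we have $g(0)\in\lambda(V)$. Then the following are equivalent: (a) $\lambda(U)=\lambda(V)$ for every continuous linear functional $\lambda$ on $\mathcal{A}$; (b) for every continuous linear functional $\lambda$ on $\mathcal{A}$, $0\notin\lambda(V)$ implies $0\notin\lambda(U)$; (c) $U^T=V^T$.
   Context: $D=\{z:|z|<1\}$, $\overline D$ its closure. $\mathcal{A}$ is the space of functions $f(z)=\sum_{k\ge0}a_k(f)z^k$ analytic in $D$, with the topology of locally uniform convergence; $\mathcal{A}_0=\{f\in\mathcal{A}: a_0(f)=1\}$. $\mathcal{A}(\overline D)$ is the set of functions analytic in some disk $\{|z|<R\}$ with $R>1$, and $\mathcal{A}_0(\overline D)=\{g\in\mathcal{A}(\overline D):a_0(g)=1\}$. The Hadamard product is $(f*g)(z)=\sum_{k\ge0}a_k(f)a_k(g)z^k$. Every continuous linear functional $\lambda$ on $\mathcal{A}$ has the form $\lambda(f)=(f*g)(1)$ for a function $g\in\mathcal{A}(\overline D)$; this is written $\lambda:=g$. For $V\subset\mathcal{A}_0$, $V^T=\{g\in\mathcal{A}_0(\overline D): (f*g)(1)\ne0 \ \forall f\in V\}$. *)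

(* Defs.v *)
From mathcomp Require Import all_boot all_order all_algebra.
From mathcomp Require Export complex.
From mathcomp Require Export all_classical all_reals all_analysis.
Import Order.TTheory GRing.Theory Num.Theory numFieldNormedType.Exports.
Local Open Scope ring_scope.
Local Open Scope classical_set_scope.
Local Open Scope complex_scope.
Local Open Scope ring_scope.

(* A function f(z) = sum_k a_k z^k analytic in a disk centred at 0 is represented
   by its Taylor coefficient sequence a : nat -> R[i]. *)

Definition pseries {R : realType} (a : nat -> R[i]) (z : R[i]) : nat -> R[i]^o :=
  series (fun k => (a k * z ^+ k : R[i]^o)).

Definition inA {R : realType} (a : nat -> R[i]) : Prop :=
  forall z : R[i], `|z| < 1 -> cvgn (pseries a z).

Definition A0 {R : realType} : set (nat -> R[i]) :=
  [set a | inA a /\ a 0%N = 1].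

Definition inAbar {R : realType} (g : nat -> R[i]) : Prop :=
  exists2 rho : R, 1 < rho & forall z : R[i], `|z| < rho%:C -> cvgn (pseries g z).

Definition A0bar {R : realType} : set (nat -> R[i]) :=
  [set g | inAbar g /\ g 0%N = 1].

(* the continuous linear functional lambda := g, lambda(f) = (f*g)(1) = sum_k a_k(f) a_k(g) *)
Definition lam {R : realType} (g f : nat -> R[i]) : R[i] :=
  limn (series (fun k => (f k * g k : R[i]^o))).

Definition transv {R : realType} (V : set (nat -> R[i])) : set (nat -> R[i]) :=
  [set g | A0bar g /\ forall f, V f -> lam g f <> 0].

(* Main.v *)
Require Import Defs.
From mathcomp Require Import all_boot all_order all_algebra.
From mathcomp Require Import complex.
From mathcomp Require Import all_classical all_reals all_analysis.
From mathcomp Require Import ring lra.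
Import Order.TTheory GRing.Theory Num.Theory numFieldNormedType.Exports.
Local Open Scope ring_scope.
Local Open Scope classical_set_scope.
Local Open Scope complex_scope.
Section S. Local Notation Re := complex.Re. Local Notation Im := complex.Im. Variable R : realType.
Implicit Types x y : R[i].
Lemma nC x : `|x| = (Re `|x|)%:C.
Proof. by case: x. Qed.
Lemma nrM x y : Re `|x * y| = Re `|x| * Re `|y|.
Proof. by rewrite normrM [`|x|]nC [`|y|]nC -rmorphM. Qed.
Lemma nr_ge0 x : 0 <= Re `|x|.
Proof. by rewrite -ler0c -nC. Qed.
Lemma nrC (a : R) : Re `|a%:C| = `|a|.
Proof. by rewrite normc_def /= expr0n /= addr0 sqrtr_sqr. Qed.
Lemma nr_le x y : `|x| <= `|y| -> Re `|x| <= Re `|y|.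
Proof. by rewrite [`|x|]nC [`|y|]nC lecR. Qed.
Lemma Re_le x : `|Re x| <= Re `|x|.
Proof. by rewrite -lecR -nC normc_ge_Re. Qed.
Lemma Im_le x : `|Im x| <= Re `|x|.
Proof.
have := Re_le (x * 'i). rewrite ReiNIm normrN nrM.
have -> : Re `|'i : R[i]| = 1 by rewrite normc_def /= expr0n /= expr1n add0r sqrtr1.
by rewrite mulr1.
Qed.
Lemma cvg_RC (x : nat -> R) (A : R) : x @ \oo --> A ->
  (fun n => (x n)%:C : R[i]^o) @ \oo --> (A%:C : R[i]^o).
Proof.
move=> hx; apply/cvgrPdist_lt => e e0.
have he : 0 < Re e by move: e0; rewrite ltcE => /andP[].
have eE : e = (Re e)%:C by move: e0; rewrite ltcE => /andP[/eqP]; clear he; case: e => a b /= ->.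
move: hx => /cvgrPdist_lt /(_ _ he); apply: filterS => n hn.
rewrite -rmorphB eE [`|_|]nC ltcR nrC //.
Qed.

Lemma real_cvg (a : nat -> R) (b : nat -> R) :
  (forall k, `|a k| <= b k) -> cvgn (series b) -> cvgn (series (a : nat -> R^o)).
Proof.
move=> hab hb; apply: normed_cvg.
apply: (series_le_cvg _ _ hab hb) => // n; exact: le_trans (hab n).
Qed.

Lemma cvgC (u : nat -> R[i]) : cvgn (series (fun k => Re `|u k|)) ->
  cvgn (series (u : nat -> R[i]^o)).
Proof.
move=> hu.
have hRe := real_cvg _ _ (fun k => Re_le (u k)) hu.
have hIm := real_cvg _ _ (fun k => Im_le (u k)) hu.
have -> : series (u : nat -> R[i]^o) = fun n =>
  ((series (fun k => Re (u k)) n)%:C : R[i]^o) + 'i * (series (fun k => Im (u k)) n)%:C.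
  apply/funext => n; rewrite /series /= !rmorph_sum mulr_sumr -big_split /=.
  by apply: eq_bigr => k _; rewrite -complexE.
apply/cvg_ex; eexists; apply: cvgD; first exact: (cvg_RC _ _ hRe).
by apply: cvgMl_tmp; exact: (cvg_RC _ _ hIm).
Qed.
Lemma bnd (a : nat -> R[i]^o) : cvgn a -> exists M : R, forall n, Re `|a n| <= M.
Proof.
move=> /cvg_seq_bounded [M0 [M0r HM]].
exists (Re (M0 + 1)) => n.
have := HM (M0 + 1) _ n I.
move=> /(_ ltac:(by rewrite ltrDl)). move=> /= h; move: h; rewrite lecE => /andP[_]; apply.
Qed.

Lemma nrX (s : R) k : 0 <= s -> Re `|s%:C ^+ k| = s ^+ k.
Proof. by move=> s0; rewrite -rmorphXn nrC ger0_norm // exprn_ge0. Qed.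

Lemma conv_fg (f g : nat -> R[i]) : inA f -> inAbar g ->
  cvgn (series (fun k => f k * g k : R[i]^o)).
Proof.
move=> hf [rho rho1 hg].
pose r := (1 + rho) / 2.
have r1 : 1 < r by rewrite /r; lra.
have rrho : r < rho by rewrite /r; lra.
have r0 : 0 < r by lra.
pose s := (1 + r^-1) / 2.
have ri1 : r^-1 < 1 by rewrite invf_lt1.
have ri0 : 0 < r^-1 by rewrite invr_gt0.
have s0 : 0 < s by rewrite /s; lra.
have s1 : s < 1 by rewrite /s; lra.
have rs : r * s = (r + 1) / 2 by rewrite /s mulrA mulrDr mulr1 mulfV ?gt_eqF.
have rs1 : 1 < r * s by rewrite rs; lra.
have cg := hg (r%:C) ltac:(by rewrite [`|_|]nC nrC ltcR ger0_norm ?ltW).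
have cf := hf (s%:C) ltac:(by rewrite [`|_|]nC nrC (_ : (1 : R[i]) = 1%:C) // ltcR ger0_norm ?ltW).
have [Mf hMf] := bnd _ (cvgP _ (cvg_series_cvg_0 cf)).
have [Mg hMg] := bnd _ (cvgP _ (cvg_series_cvg_0 cg)).
have Mf0 : 0 <= Mf by apply: le_trans (hMf 0%N); apply: nr_ge0.
have Mg0 : 0 <= Mg by apply: le_trans (hMg 0%N); apply: nr_ge0.
apply: cvgC.
have q1 : `|(r * s)^-1| < 1.
  by rewrite ger0_norm ?invr_ge0 ?(ltW (lt_trans _ rs1)) // invf_lt1 // (lt_trans _ rs1).
apply: (@series_le_cvg R _ (geometric (Mf * Mg) (r * s)^-1)); last exact: is_cvg_geometric_series.
- by move=> n; apply: nr_ge0.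
- by move=> n; rewrite /geometric /= mulr_ge0 ?exprn_ge0 ?mulr_ge0 // invr_ge0 ltW // (lt_trans _ rs1).
move=> k.
have s0' := ltW s0; have r0' := ltW r0.
have := hMf k; have := hMg k; rewrite !nrM !nrX // => hg' hf'.
suff h : Re `|f k| * Re `|g k| <= Mf * Mg * (r * s)^-1 ^+ k.
  by move: h; rewrite -nrM.
have rsk : 0 < (r * s) ^+ k by rewrite exprn_gt0 // (lt_trans _ rs1).
rewrite exprVn ler_pdivlMr // exprMn.
have -> : Re `|f k| * Re `|g k| * (r ^+ k * s ^+ k) = (Re `|f k| * s ^+ k) * (Re `|g k| * r ^+ k).
  by rewrite [r ^+ k * _]mulrC mulrACA.
by apply: ler_pM => //; rewrite mulr_ge0 ?nr_ge0 ?exprn_ge0 ?ltW.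
Qed.
End S.
Section S. Variable R : realType. Local Notation Re := complex.Re. Local Notation Im := complex.Im.
Definition dl (w : R[i]) (k : nat) : R[i] := if k == 0%N then w else 0.

Lemma dlS w k : dl w k.+1 = 0. Proof. by []. Qed.
Lemma dl0 w : dl w 0 = w. Proof. by []. Qed.

Lemma series_delta (h : nat -> R[i]^o) : (forall k, (0 < k)%N -> h k = 0) ->
  series h @ \oo --> h 0%N.
Proof.
move=> h0; apply: cvg_near_cst; exists 1%N => // n /= hn.
case: n hn => // n _; rewrite /series /= big_mkord big_ord_recl big1 ?addr0 //.
by move=> i _; apply: h0.
Qed.

Lemma lam_shift (g f : nat -> R[i]) w : cvgn (series (fun k => f k * g k : R[i]^o)) ->
  lam (fun k => g k - dl w k) f = lam g f - f 0%N * w.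
Proof.
move=> hc; rewrite /lam.
have -> : (fun k => f k * (g k - dl w k) : R[i]^o) =
  (fun k => f k * g k : R[i]^o) - (fun k => f k * dl w k : R[i]^o).
  by apply/funext => k /=; rewrite mulrBr.
have hd : series (fun k => f k * dl w k : R[i]^o) @ \oo --> (f 0%N * w : R[i]^o).
  have := series_delta (fun k => f k * dl w k : R[i]^o).
  by rewrite dl0; apply => -[|k] // _; rewrite dlS mulr0.
have H : series ((fun k => f k * g k : R[i]^o) - (fun k => f k * dl w k : R[i]^o)) @ \oo -->
   (limn (series (fun k => f k * g k : R[i]^o)) - f 0%N * w : R[i]^o).
  rewrite seriesD seriesN; exact: (cvgB hc hd).
exact: (cvg_lim (@norm_hausdorff _ _) H).
Qed.

Lemma inAbar_shift (g : nat -> R[i]) w : inAbar g -> inAbar (fun k => g k - dl w k).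
Proof.
case=> rho h1 hg; exists rho; first exact: h1; move=> z hz.
have -> : @Defs.pseries R (fun k => (g k - dl w k : R[i])) z = series (
  (fun k => g k * z ^+ k : R[i]^o) - (fun k => dl w k * z ^+ k : R[i]^o)).
  by rewrite /Defs.pseries; congr series; apply/funext => k /=; rewrite mulrBl.
have hd : series (fun k => dl w k * z ^+ k : R[i]^o) @ \oo --> (dl w 0%N * z ^+ 0 : R[i]^o).
  by apply: series_delta => -[|k] // _; rewrite dlS mul0r.
rewrite seriesD seriesN; exact: (cvgP _ (cvgB (hg z hz) hd)).
Qed.

Lemma lam_scale (g f : nat -> R[i]) c : cvgn (series (fun k => f k * g k : R[i]^o)) ->
  lam (fun k => c * g k) f = c * lam g f.
Proof.
move=> hc; rewrite /lam.
have -> : series (fun k => f k * (c * g k) : R[i]^o) =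
    (fun n => c *: series (fun k => f k * g k : R[i]^o) n : R[i]^o).
  by apply/funext => n; rewrite /series /= scaler_sumr; apply: eq_bigr => k _; exact: mulrCA.
have H : (fun n => c *: series (fun k => f k * g k : R[i]^o) n : R[i]^o) @ \oo -->
   (c *: limn (series (fun k => f k * g k : R[i]^o)) : R[i]^o).
  by apply: cvgZ; [exact: cvg_cst | exact: hc].
exact: (cvg_lim (@norm_hausdorff _ _) H).
Qed.

Lemma inAbar_scale (g : nat -> R[i]) c : inAbar g -> inAbar (fun k => c * g k).
Proof.
case=> rho h1 hg; exists rho; first exact: h1; move=> z hz.
have -> : @Defs.pseries R (fun k => (c * g k : R[i])) z =
    (fun n => c *: Defs.pseries g z n : R[i]^o).
  by apply/funext => n; rewrite /Defs.pseries /series /= scaler_sumr; apply: eq_bigr => k _; exact: esym (mulrA _ _ _).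
apply: cvgP; apply: cvgZ; [exact: cvg_cst | exact: (hg z hz)].
Qed.
End S.
Arguments dl {R}.
Arguments conv_fg {R f g}.
Arguments lam_shift {R g f w}.
Arguments lam_scale {R g f c}.
Arguments inAbar_shift {R g} w.
Arguments inAbar_scale {R g} c.

Theorem lemma4 (R : realType) (U V : set (nat -> R[i])) :
  V `<=` U -> U `<=` A0 ->
  (forall g, inAbar g -> (lam g @` V) (g 0%N)) ->
  let a := forall g, inAbar g -> lam g @` U = lam g @` V in
  let b := forall g, inAbar g -> ~ (lam g @` V) 0 -> ~ (lam g @` U) 0 in
  let c := transv U = transv V in
  (a <-> b) /\ (b <-> c).
Proof.
move=> hVU hUA hH a b c.
have ab : a -> b.
  by move=> ha g hg hV; rewrite (ha g hg).
have ba : b -> a.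
  move=> hb g hg; apply/seteqP; split; last first.
    by move=> _ [v hv <-]; exists v; [exact: hVU v hv | by []].
  move=> _ [f hf <-].
  have [hfA hf0] := hUA f hf.
  have cfg := conv_fg hfA hg.
  have hg' := inAbar_shift (lam g f) hg.
  have h0 : (lam (fun k => g k - dl (lam g f) k) @` U) 0.
    by exists f; [exact: hf | rewrite (lam_shift cfg) hf0 mul1r subrr].
  have [v hv hv0] : (lam (fun k => g k - dl (lam g f) k) @` V) 0.
    by apply: contrapT => hn; exact: hb _ hg' hn h0.
  exists v; first exact: hv.
  have [hvA hv0'] := hUA v (hVU v hv).
  move: hv0; rewrite (lam_shift (conv_fg hvA hg)) hv0' mul1r => /eqP.
  by rewrite subr_eq0 => /eqP.
have bc : b -> c.
  move=> hb; apply/seteqP; split => g [hgA hgU]; split => //.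
    by move=> f hf; apply: hgU; exact: hVU.
  move=> f hf hf0; apply: (hb g hgA.1).
    by move=> [v hv hv0]; exact: hgU v hv hv0.
  by exists f.
have cb : c -> b.
  move=> hc g hg hV [f hf hf0].
  have [v hv hvg] := hH g hg.
  have g00 : g 0%N != 0.
    by apply/eqP => e; apply: hV; exists v; [exact: hv | rewrite hvg e].
  have hg'T : transv V (fun k => (g 0%N)^-1 * g k).
    split.
      by split; [exact: inAbar_scale | rewrite mulVf].
    move=> u hu; have [huA _] := hUA u (hVU u hu).
    rewrite (lam_scale (conv_fg huA hg)).
    apply/eqP; rewrite mulf_eq0 negb_or invr_eq0 g00 /=; apply/eqP => e.
    by apply: hV; exists u.
  rewrite -hc in hg'T; case: hg'T => _ /(_ f hf).
  have [hfA _] := hUA f hf.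
  by rewrite (lam_scale (conv_fg hfA hg)) hf0 mulr0.
by split; split.
Qed.
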